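(* Let $M$ be a finite monoid such that for all $x,y\in M$, either $R(x)\subseteq R(xy)$ or $R(y)\subseteq R(xy)$. Then there exists $k\ge2$ such that $x^k=x$ for all $x\in M$.
   Context: For $m$ in a monoid $M$, $R(m)=\{my: y\in M\}$ is the right ideal of $m$. *)

(* Defs.v *)
From mathcomp Require Import all_boot.
Set Implicit Arguments. Unset Strict Implicit. Unset Printing Implicit Defensive.

Definition is_monoid (T : Type) (mul : T -> T -> T) (e : T) : Prop :=
  associative mul /\ left_id e mul /\ right_id e mul.

Definition right_ideal (T : Type) (mul : T -> T -> T) (m : T) : T -> Prop :=
  fun z => exists y : T, z = mul m y.

Definition pincl (T : Type) (A B : T -> Prop) : Prop := forall z, A z -> B z.

Fixpoint mpow (T : Type) (mul : T -> T -> T) (e : T) (x : T) (k : nat) : T :=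
  match k with
  | 0 => e
  | k'.+1 => mul x (mpow mul e x k')
  end.

(* Main.v *)
Require Import Defs.
From mathcomp Require Import all_boot.
Set Implicit Arguments.

Section Aux.
Variables (T : finType) (mul : T -> T -> T) (e : T).
Hypothesis hM : is_monoid mul e.

Local Notation P := (mpow mul e).

Lemma mpowD x m n : P x (m + n) = mul (P x m) (P x n).
Proof.
case: hM => A [L R].
elim: m => [|m IH] /=; first by rewrite L.
by rewrite IH A.
Qed.

Lemma mpowM x p j : P x (p * j) = P (P x p) j.
Proof.
elim: j => [|j IH]; first by rewrite muln0.
by rewrite mulnS mpowD IH.
Qed.

Lemma xpow_rep x y : x = mul (mul x x) y ->
  forall n, x = mul (P x n.+1) (P y n).
Proof.
case: hM => A [L R] H.
elim=> [|n IH]; first by rewrite /= R R.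
have E : P x n.+1 = mul (P x n) x by rewrite -addn1 mpowD /= R.
have E2 : P x n.+2 = mul (P x n.+1) x by rewrite -addn1 mpowD /= R.
have E3 : P y n.+1 = mul y (P y n) by [].
rewrite E2 E3 E.
transitivity (mul (mul (P x n) (mul (mul x x) y)) (P y n)).
  by rewrite -H -E.
by rewrite !A.
Qed.

Lemma periodic x : exists a p, 0 < p <= #|T| /\ P x a = P x (a + p).
Proof.
pose f := fun i : 'I_#|T|.+1 => P x i.
have : [exists i : 'I_#|T|.+1, exists j : 'I_#|T|.+1, (i < j) && (f i == f j)].
  apply: contraT => Hn.
  have inj : injective f.
    move=> i j Hij; apply/eqP; rewrite eq_sym; apply: contraT => Hne.
    case/negP: Hn; case: (ltngtP i j) => Hlt.
    - by apply/existsP; exists i; apply/existsP; exists j; rewrite Hlt Hij eqxx.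
    - by apply/existsP; exists j; apply/existsP; exists i; rewrite Hlt Hij eqxx.
    - by move: Hne; rewrite (val_inj Hlt) eqxx.
  by move: (leq_card f inj); rewrite card_ord ltnn.
case/existsP=> i /existsP [j /andP [Hij /eqP Hf]].
exists i, (j - i); split.
  rewrite subn_gt0 Hij /=.
  have := ltn_ord j; rewrite ltnS => Hj.
  exact: leq_trans (leq_subr _ _) Hj.
by rewrite subnKC ?(ltnW Hij).
Qed.

Lemma shift x a p m : P x a = P x (a + p) -> a <= m -> P x m = P x (m + p).
Proof.
move=> H Ham; rewrite -(subnKC Ham).
rewrite -addnA (addnC _ p) addnA (mpowD x a) (mpowD x (a + p)).
by rewrite H.
Qed.

End Aux.

Theorem lemmaB1 (T : finType) (mul : T -> T -> T) (e : T)
  (hM : is_monoid mul e)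
  (hR : forall x y : T,
      pincl (right_ideal mul x) (right_ideal mul (mul x y)) \/
      pincl (right_ideal mul y) (right_ideal mul (mul x y))) :
  exists k : nat, 2 <= k /\ forall x : T, mpow mul e x k = x.
Proof.
have hM' := hM; case: hM' => A [L R].
exists (#|T|`!).+1; split.
  by rewrite ltnS fact_gt0.
move=> x.
have [y Hy] : exists y, x = mul (mul x x) y.
  have Hx : right_ideal mul x x by exists e; rewrite R.
  by case: (hR x x) => H; have [y Hy] := H _ Hx; exists y.
have [a [p [/andP [p0 pN] Hap]]] := @periodic T mul e x.
have rep := @xpow_rep T mul e hM x y Hy a.
have Hp1 : mpow mul e x p.+1 = x.
  have E : mpow mul e x p.+1 = mul (mpow mul e x p) x.
    by rewrite -addn1 (@mpowD T mul e hM) /= R.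
  rewrite E.
  transitivity (mul (mpow mul e x p) (mul (mpow mul e x a.+1) (mpow mul e y a))).
    by rewrite -rep.
  rewrite A -(@mpowD T mul e hM) addnC.
  by rewrite -(@shift T mul e hM x a p _ Hap (leqnSn a)) -rep.
have Hj : forall j, mpow mul e x (p * j).+1 = x.
  elim=> [|j IH]; first by rewrite muln0 /= R.
  by rewrite mulnS -addSn (@mpowD T mul e hM) Hp1.
have /dvdnP [q ->] : p %| #|T|`! by apply: dvdn_fact; rewrite p0.
by rewrite mulnC Hj.
Qed.
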